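(* Let $n\ge 1$, $V=\{0,1\}^n$, $\mu$ the uniform probability measure on $V$, and $\beta=\log_2(3/2)$. For every $A\subseteq V$, \[ \int h_A^\beta\, d\mu \;\ge\; 2\,\mu(A)\bigl(1-\mu(A)\bigr). \]
   Context: $Q_n$ is the Hamming cube with vertex set $V=\{0,1\}^n$, two vertices adjacent iff they differ in exactly one coordinate. For $T\subseteq V$ and $x\in V$, $d_T(x)$ denotes the number of neighbors of $x$ in $T$. For $S\subseteq V$, $h_S:V\to\mathbb N$ is defined by $h_S(x)=d_{V\setminus S}(x)$ if $x\in S$ and $h_S(x)=0$ if $x\notin S$. For $f:V\to\mathbb R$ and $X\subseteq V$, $\int_X f\,d\mu=\sum_{x\in X}f(x)\mu(x)$ and $\int=\int_V$. Here $0^\beta=0$. *)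

(* Defs.v *)
From HB Require Import structures.
From mathcomp Require Import all_boot.
From Stdlib Require Import Reals.
Set Implicit Arguments. Unset Strict Implicit. Unset Printing Implicit Defensive.

Definition cube (n : nat) : finType := {ffun 'I_n -> bool}.

Definition adj (n : nat) (x y : cube n) : bool :=
  #|[set i : 'I_n | x i != y i]| == 1%N.

Definition deg (n : nat) (T : {set cube n}) (x : cube n) : nat :=
  #|[set y : cube n | adj x y & y \in T]|.

Definition hS (n : nat) (S : {set cube n}) (x : cube n) : nat :=
  if x \in S then deg (~: S) x else 0%N.

(* real power with the convention 0^b = 0 (used for x >= 0) *)
Definition rpow0 (x b : R) : R :=
  if Req_EM_T x 0 then 0%R else Rpower x b.

Definition mu (n : nat) (x : cube n) : R := (/ (2 ^ n))%R.

Definition integral (n : nat) (f : cube n -> R) : R :=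
  foldr Rplus 0%R (map (fun x => (f x * mu x)%R) (enum (cube n))).

Definition muS (n : nat) (A : {set cube n}) : R :=
  integral (fun x : cube n => if x \in A then 1%R else 0%R).

Definition beta : R := (ln (3/2) / ln 2)%R.

(* Main.v *)
Require Import Defs.
From HB Require Import structures.
From mathcomp Require Import all_boot.
From Stdlib Require Import Reals.
From Stdlib Require Import Lra.
Set Implicit Arguments. Unset Strict Implicit. Unset Printing Implicit Defensive.

HB.instance Definition _ := Monoid.isComLaw.Build R 0%R Rplus (fun a b c => esym (Rplus_assoc a b c)) Rplus_comm Rplus_0_l.

Notation RS := (fun (T : finType) (F : T -> R) => \big[Rplus/0%R]_(x : T) F x).

Lemma RS_le (T : finType) (F G : T -> R) : (forall x, F x <= G x)%R ->
  (\big[Rplus/0%R]_(x : T) F x <= \big[Rplus/0%R]_(x : T) G x)%R.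
Proof. move=> H; apply: (big_ind2 (fun a b => a <= b)%R) => //; [lra| move=> *; lra]. Qed.

Lemma RS_scal (T : finType) (c : R) (F : T -> R) :
  (\big[Rplus/0%R]_(x : T) (c * F x) = c * \big[Rplus/0%R]_(x : T) F x)%R.
Proof. apply: (big_ind2 (fun a b => a = c * b)%R) => //; [ring | move=> ? ? ? ? -> ->; ring]. Qed.

Lemma RS_INR (T : finType) (f : T -> nat) :
  (\big[Rplus/0%R]_(x : T) INR (f x) = INR (\sum_(x : T) f x))%R.
Proof. symmetry; apply: (big_morph INR) => // m n; exact: plus_INR. Qed.

Lemma RS_ge0 (T : finType) (F : T -> R) : (forall x, 0 <= F x)%R ->
  (0 <= \big[Rplus/0%R]_(x : T) F x)%R.
Proof. move=> H; apply: (big_ind (fun a => 0 <= a)%R) => //; [lra| move=> *; lra]. Qed.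

Lemma card_sum (T : finType) (P : pred T) : #|[set x | P x]| = \sum_(x : T) (P x : nat).
Proof.
rewrite -sum1_card big_mkcond; apply: eq_bigr => x _; rewrite inE; by case: (P x).
Qed.

Section Cube.
Variable n : nat.
Definition ccons (b : bool) (y : cube n) : cube n.+1 :=
  [ffun i : 'I_n.+1 => match unlift ord0 i with Some j => y j | None => b end].
Definition chd (x : cube n.+1) : bool := x ord0.
Definition ctl (x : cube n.+1) : cube n := [ffun j => x (lift ord0 j)].

Lemma ccons0 b y : ccons b y ord0 = b.
Proof. by rewrite /ccons ffunE unlift_none. Qed.
Lemma cconsS b y j : ccons b y (lift ord0 j) = y j.
Proof. by rewrite /ccons ffunE liftK. Qed.
Lemma chd_cons b y : chd (ccons b y) = b. Proof. exact: ccons0. Qed.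
Lemma ctl_cons b y : ctl (ccons b y) = y.
Proof. by apply/ffunP => j; rewrite ffunE cconsS. Qed.
Lemma ccons_eta x : ccons (chd x) (ctl x) = x.
Proof.
apply/ffunP => i; rewrite /ccons ffunE; case: unliftP => [j ->|->] //.
by rewrite ffunE.
Qed.

Lemma big_cube (R0 : Type) (idx : R0) (op : Monoid.com_law idx) (F : cube n.+1 -> R0) :
  \big[op/idx]_(x : cube n.+1) F x = \big[op/idx]_(b : bool) \big[op/idx]_(y : cube n) F (ccons b y).
Proof.
rewrite pair_big /=.
rewrite (reindex (fun p : bool * cube n => ccons p.1 p.2)) //=.
exists (fun x => (chd x, ctl x)) => [[b y] _|x _] /=.
  by rewrite chd_cons ctl_cons.
by rewrite ccons_eta.
Qed.

Lemma card_diff b c y w :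
  #|[set i | ccons b y i != ccons c w i]| = (b != c) + #|[set j | y j != w j]|.
Proof.
rewrite !card_sum big_ord_recl ccons0 ccons0; congr (_ + _).
by apply: eq_bigr => j _; rewrite !cconsS.
Qed.

Lemma adj_cons b c y w : adj (ccons b y) (ccons c w) = if b == c then adj y w else y == w.
Proof.
rewrite /adj (_ : #|_| = (b != c) + #|[set j | y j != w j]|); last exact: card_diff.
have K : (1 + #|[set j | y j != w j]| == 1) = (y == w).
  rewrite add1n eqSS cards_eq0; apply/eqP/eqP => [H|->].
  apply/ffunP => j; apply/eqP; apply/negP => /negP Hj.
  have Hin : j \in [set j | y j != w j] by rewrite inE.
  by rewrite H inE in Hin.
  by apply/setP => j; rewrite !inE eqxx.
by case: b c K => [] [] /= K.
Qed.

Definition slice (A : {set cube n.+1}) (b : bool) : {set cube n} := [set z | ccons b z \in A].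

Lemma deg_cons (A : {set cube n.+1}) b y :
  deg (~: A) (ccons b y) = deg (~: slice A b) y + (ccons (~~ b) y \notin A).
Proof.
rewrite /deg !card_sum big_cube big_bool.
have E1 : \sum_(w : cube n) (adj (ccons b y) (ccons b w) && (ccons b w \in ~: A) : nat)
   = \sum_(w : cube n) (adj y w && (w \in ~: slice A b) : nat).
  by apply: eq_bigr => w _; rewrite adj_cons eqxx !inE.
have E2 : \sum_(w : cube n) (adj (ccons b y) (ccons (~~ b) w) && (ccons (~~ b) w \in ~: A) : nat)
   = (ccons (~~ b) y \notin A).
  rewrite (bigD1 y) //= big1 ?addn0.
    by rewrite adj_cons; case: (b) => /=; rewrite eqxx ?inE.
  move=> w Hw; rewrite adj_cons; case: (b) => /=; by rewrite eq_sym (negbTE Hw).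
case: b E1 E2 => /= -> -> //; by rewrite addnC.
Qed.
End Cube.

Section RealsPart.
Local Open Scope R_scope.


Lemma INR_expn2 k : INR (expn 2 k) = 2 ^ k.
Proof. elim: k => [|k IH] //=; rewrite expnS mult_INR IH /=; ring. Qed.

Definition psi (u : nat) : R :=
  match u with 0 => 0 | _ => (3/2) ^ (trunc_log 2 u) * (1 + INR u / 2 ^ (trunc_log 2 u)) / 2 end.

Lemma psi_seg (k v : nat) : (0 < v)%nat -> (expn 2 k <= v <= expn 2 k.+1)%nat ->
  psi v = (3/2) ^ k * (1 + INR v / 2 ^ k) / 2.
Proof.
move=> v0 /andP [H1 H2]; rewrite /psi; case: v v0 H1 H2 => [//|v] _ H1 H2.
have P2 : 0 < 2 ^ k by apply: pow_lt; lra.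
case: (ltngtP v.+1 (expn 2 k.+1)) H2 => // [Hlt _|Heq _].
  by rewrite (@trunc_log_eq 2 k) // H1 Hlt.
rewrite Heq trunc_expnK // INR_expn2 /=. field; lra.
Qed.

Lemma psi_props (u : nat) : (0 < u)%nat ->
  exists k, 1 <= (3/2)^k /\ (3/2)^k <= psi u /\
    psi u.+1 = psi u + (3/2)^k / (2 * 2^k) /\ 1 <= (3/2)^k * (3/2)^k / (2^k).
Proof.
move=> u0; exists (trunc_log 2 u).
have [H1 H2] := andP (trunc_log_bounds (isT : (1 < 2)%nat) u0).
set k := trunc_log 2 u in H1 H2 *.
have P2 : 0 < 2 ^ k by apply: pow_lt; lra.
have Hu : 2 ^ k <= INR u by rewrite -INR_expn2; apply: le_INR; apply/leP.
have E1 := psi_seg u0 (introT andP (conj H1 (ltnW H2))).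
have E2 := psi_seg (isT : (0 < u.+1)%nat) (introT andP (conj (leqW H1) H2)).
have Hc : 1 <= (3/2)^k by apply: pow_R1_Rle; lra.
split; first done. split.
  rewrite E1. have : 1 <= INR u / 2^k.
    apply (Rmult_le_reg_r (2^k)) => //; field_simplify; lra.
  nra.
split. rewrite E1 E2 S_INR; field; lra.
rewrite -Rpow_mult_distr.
apply (Rmult_le_reg_r (2^k)) => //. field_simplify; [|lra].
apply: pow_incr; lra.
Qed.

Lemma psi0 : psi 0 = 0. Proof. by []. Qed.
Lemma psi1 : psi 1 = 1.
Proof. rewrite (@psi_seg 0) //=; field. Qed.

Lemma psi_ge1 (u : nat) : (0 < u)%nat -> 1 <= psi u.
Proof. move=> /psi_props [k [? [? _]]]; lra. Qed.

Lemma psi_key (u : nat) : (0 < u)%nat -> 1/2 <= psi u * (psi u.+1 - psi u).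
Proof.
move=> /psi_props [k [Hc [Hp [E Hk]]]]; rewrite E.
have P2 : 0 < 2 ^ k by apply: pow_lt; lra.
have : (3/2)^k * (3/2)^k / (2 * 2^k) <= psi u * ((3/2)^k / (2 * 2^k)).
  rewrite /Rdiv !Rmult_assoc. apply Rmult_le_compat_r; [|lra].
  apply: Rmult_le_pos; [lra|]. apply: Rlt_le; apply: Rinv_0_lt_compat; lra.
have : 1/2 <= (3/2)^k * (3/2)^k / (2 * 2^k).
  replace ((3/2)^k * (3/2)^k / (2 * 2^k)) with (((3/2)^k * (3/2)^k / 2^k) / 2) by (field; lra).
  lra.
move=> *; replace (psi u + (3/2)^k / (2 * 2^k) - psi u) with ((3/2)^k / (2 * 2^k)) by ring.
lra.
Qed.

Lemma psi_step (u : nat) : psi u <= psi u.+1.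
Proof.
case: u => [|u]; first by rewrite psi1 psi0; lra.
have := psi_key (isT : (0 < u.+1)%nat). have := psi_ge1 (isT : (0 < u.+1)%nat).
move=> H1 H2. nra.
Qed.

Lemma psi_mono (u v : nat) : (u <= v)%nat -> psi u <= psi v.
Proof.
move/subnK <-; elim: (v - u)%nat => [|d IH]; first by rewrite add0n; lra.
rewrite addSn; have := psi_step (d + u); lra.
Qed.

Lemma psi_ge0 (u : nat) : 0 <= psi u.
Proof. rewrite -psi0; exact: psi_mono. Qed.



Lemma ln_le_sub1 t : 0 < t -> ln t <= t - 1.
Proof. move=> Ht; have := exp_ineq1_le (ln t); rewrite exp_ln //; lra. Qed.

Lemma exp_le x y : x <= y -> exp x <= exp y.
Proof. case/Rle_lt_or_eq_dec => [/exp_increasing|->]; lra. Qed.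

Lemma bern (z b : R) : 0 < z -> 0 <= b <= 1 -> Rpower z b <= 1 + b * (z - 1).
Proof.
move=> Hz Hb; set m := 1 + b * (z - 1).
have Hm : 0 < m by rewrite /m; nra.
rewrite /Rpower -(exp_ln m) //; apply: exp_le.
have H1 := ln_le_sub1 (Rmult_lt_0_compat _ _ Hz (Rinv_0_lt_compat _ Hm)).
have H2 := ln_le_sub1 (Rinv_0_lt_compat _ Hm).
rewrite ln_mult ?ln_Rinv in H1; try apply: Rinv_0_lt_compat; try lra.
rewrite ln_Rinv in H2 => //.
have E : b * (z * / m - 1) + (1 - b) * (/ m - 1) = 0.
  rewrite /m; field; rewrite -/m; lra.
nra.
Qed.

Lemma ln2_pos : 0 < ln 2.
Proof. rewrite -ln_1; apply: ln_increasing; lra. Qed.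
Lemma ln32_pos : 0 < ln (3/2).
Proof. rewrite -ln_1; apply: ln_increasing; lra. Qed.
Lemma ln32_lt : ln (3/2) < ln 2.
Proof. apply: ln_increasing; lra. Qed.

Lemma beta_bounds : 0 <= beta <= 1.
Proof.
have := ln2_pos; have := ln32_pos; have := ln32_lt; rewrite /beta => *.
split; first by apply: Rmult_le_pos; [lra | apply: Rlt_le; apply: Rinv_0_lt_compat; lra].
apply (Rmult_le_reg_r (ln 2)); first lra. field_simplify; lra.
Qed.

Lemma beta_ln2 : beta * ln 2 = ln (3/2).
Proof. have := ln2_pos; rewrite /beta => *; field; lra. Qed.

Lemma Rpower1 b : Rpower 1 b = 1.
Proof. by rewrite /Rpower ln_1 Rmult_0_r exp_0. Qed.

Lemma Rpower2 : Rpower 2 beta = 3/2.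
Proof. by rewrite /Rpower beta_ln2 exp_ln; lra. Qed.

Lemma Rpower2k k : Rpower (2 ^ k) beta = (3/2) ^ k.
Proof.
rewrite /Rpower ln_pow; last lra.
rewrite -Rpower_pow; last lra.
rewrite /Rpower -beta_ln2; f_equal; ring.
Qed.

Lemma chord x : 1 <= x <= 2 -> (1 + x) / 2 <= Rpower x beta.
Proof.
move=> Hx; have Hb := beta_bounds.
set X := Rpower x beta.
have HX : 0 < X by apply: exp_pos.
set y := / x.
have Hy : 0 < y by apply: Rinv_0_lt_compat; lra.
have Hxy : x * y = 1 by rewrite /y; field; lra.
have E1 : Rpower y beta * X = 1.
  rewrite /X Rpower_mult_distr; try lra.
  by rewrite (_ : y * x = 1) ?Rpower1 // Rmult_comm.
have E2 : Rpower (2 * y) beta * X = 3/2.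
  rewrite /X Rpower_mult_distr; try lra.
  by rewrite (_ : 2 * y * x = 2); [exact: Rpower2 | rewrite Rmult_assoc (Rmult_comm y) Hxy; ring].
have B1 := bern Hy Hb.
have B2 := bern (Rmult_lt_0_compat _ _ (Rlt_0_2) Hy) Hb.
have I1 : 1 <= X * (1 + beta * (y - 1)).
  have := Rmult_le_compat_r X _ _ (Rlt_le _ _ HX) B1; rewrite E1; lra.
have I2 : 3/2 <= X * (1 + beta * (2 * y - 1)).
  have := Rmult_le_compat_r X _ _ (Rlt_le _ _ HX) B2; rewrite E2; lra.
have J1 : (2 - x) * 1 <= (2 - x) * (X * (1 + beta * (y - 1))) by apply: Rmult_le_compat_l; lra.
have J2 : (x - 1) * (3/2) <= (x - 1) * (X * (1 + beta * (2 * y - 1))) by apply: Rmult_le_compat_l; lra.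
have E : (2 - x) * (X * (1 + beta * (y - 1))) + (x - 1) * (X * (1 + beta * (2 * y - 1)))
   = X + X * beta * (x * y - 1) by ring.
rewrite Hxy in E; lra.
Qed.

Lemma psi_le_rpow v : psi v <= rpow0 (INR v) beta.
Proof.
rewrite /rpow0; case: Req_EM_T => [H|H] /=.
  case: v H => [|v] H; first by rewrite psi0; lra.
  by have := pos_INR v; rewrite S_INR in H; lra.
case: v H => [|v] H; first by rewrite psi0 in H *; simpl in H; lra.
have v0 : (0 < v.+1)%nat by [].
have [H1 H2] := andP (trunc_log_bounds (isT : (1 < 2)%nat) v0).
set k := trunc_log 2 v.+1 in H1 H2.
rewrite (@psi_seg k) //; last by rewrite H1 ltnW.
have P2 : 0 < 2 ^ k by apply: pow_lt; lra.
set x := INR v.+1 / 2 ^ k.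
have Hx : 1 <= x <= 2.
  rewrite /x; split; apply (Rmult_le_reg_r (2^k)) => //; field_simplify; try lra.
    by rewrite -INR_expn2; apply: le_INR; apply/leP.
  rewrite (_ : 2 * 2 ^ k = INR (expn 2 k.+1)); first by apply: le_INR; apply/leP; exact: ltnW.
  by rewrite INR_expn2.
rewrite (_ : INR v.+1 = 2 ^ k * x); last by rewrite /x; field; lra.
rewrite -Rpower_mult_distr; try lra.
rewrite Rpower2k; have := chord Hx; have : 1 <= (3/2)^k by apply: pow_R1_Rle; lra.
nra.
Qed.

Lemma step_real (a b : R) : 0 <= b <= a -> a <= 1 ->
  exists g T, 0 <= g <= 1 /\ 0 <= T /\
    (forall u : nat, T <= psi u.+1 - psi u + g * psi u) /\
    (a - b) ^ 2 + 2 * g * a * (1 - a) <= (a - b) * T.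
Proof.
move=> Hab Ha1; set e := a - b.
have He0 : 0 <= e by rewrite /e; lra.
have Hea : e <= a by rewrite /e; lra.
clearbody e.
have Hu0 : psi 1 - psi 0 = 1 by rewrite psi1 psi0; ring.
case: (Rle_lt_dec e (1/2)) => He.
  exists (2 * e ^ 2), (2 * e); split; [nra|split; [nra|split]].
    case=> [|u]; first by rewrite Hu0 psi0; nra.
    have := psi_key (isT : (0 < u.+1)%nat); have := psi_ge1 (isT : (0 < u.+1)%nat).
    set p := psi u.+1; set q := psi u.+2 => Hp Hk.
    have : 0 <= (1 - 2 * e * p) ^ 2 by apply: pow2_ge_0.
    move=> Hsq.
    apply (Rmult_le_reg_l p); first lra.
    nra.
  have : 0 <= e ^ 2 * (1 - 2 * a) ^ 2 by apply: Rmult_le_pos; apply: pow2_ge_0.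
  nra.
exists (1/2), 1; split; [lra|split; [lra|split]].
  case=> [|u]; first by rewrite Hu0 psi0; nra.
  have := psi_key (isT : (0 < u.+1)%nat); have := psi_ge1 (isT : (0 < u.+1)%nat).
  set p := psi u.+1; set q := psi u.+2 => Hp Hk.
  apply (Rmult_le_reg_l p); first lra.
  have : 0 <= (p - 1) ^ 2 by apply: pow2_ge_0.
  nra.
have : 0 <= (a - e) * (a + e - 1) by apply: Rmult_le_pos; lra.
nra.
Qed.

End RealsPart.

Lemma INR_addn (m k : nat) : INR (m + k) = (INR m + INR k)%R.
Proof. exact: plus_INR. Qed.

Lemma card_sumS (T : finType) (A : {set T}) : \sum_(x : T) (x \in A : nat) = #|A|.
Proof. rewrite -sum1_card [RHS]big_mkcond; apply: eq_bigr => x _; by case: (x \in A). Qed.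

Lemma hS_cons n (A : {set cube n.+1}) b y :
  hS A (ccons b y) = (hS (slice A b) y + (y \in slice A b :\: slice A (~~ b)))%nat.
Proof.
rewrite /hS deg_cons !inE; case: (ccons b y \in A) => /=.
  by rewrite andbT.
by rewrite andbF.
Qed.

Lemma card_slice n (A : {set cube n.+1}) : #|A| = (#|slice A true| + #|slice A false|)%nat.
Proof.
rewrite -!card_sumS big_cube big_bool; congr (_ + _)%nat; apply: eq_bigr => y _; by rewrite inE.
Qed.

Lemma card_cube_le n (A : {set cube n}) : (#|A| <= expn 2 n)%nat.
Proof. have := max_card A; by rewrite card_ffun card_bool card_ord. Qed.

Definition SR n (A : {set cube n}) : R := \big[Rplus/0%R]_(x : cube n) psi (hS A x).

Definition Pn n := forall A : {set cube n},
  (2 * INR #|A| * (2 ^ n - INR #|A|) <= SR A * 2 ^ n)%R.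

Lemma SR_ge0 n (A : {set cube n}) : (0 <= SR A)%R.
Proof. apply: RS_ge0 => x; exact: psi_ge0. Qed.

Lemma pair_step n (A0 A1 : {set cube n}) : Pn n -> (#|A1| <= #|A0|)%nat ->
  let k0 := INR #|A0| in let k1 := INR #|A1| in let N := (2 ^ n)%R in
  (2 * (k0 + k1) * (2 * N - (k0 + k1)) <=
    (\big[Rplus/0%R]_(y : cube n) psi (hS A0 y + (y \in A0 :\: A1))%nat +
     \big[Rplus/0%R]_(y : cube n) psi (hS A1 y + (y \in A1 :\: A0))%nat) * (2 * N))%R.
Proof.
move=> IH Hle k0 k1 N.
have HN : (0 < N)%R by apply: pow_lt; lra.
have Hk0N : (k0 <= N)%R.
  rewrite /k0 /N -INR_expn2; apply: le_INR; apply/leP; exact: card_cube_le.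
have Hk1k0 : (k1 <= k0)%R by apply: le_INR; apply/leP.
have Hk1 : (0 <= k1)%R by apply: pos_INR.
have [g [T [Hg [HT [Hpt Hfin]]]]] : exists g T, (0 <= g <= 1 /\ 0 <= T /\
    (forall u : nat, T <= psi u.+1 - psi u + g * psi u) /\
    (k0 / N - k1 / N) ^ 2 + 2 * g * (k0 / N) * (1 - k0 / N) <= (k0 / N - k1 / N) * T)%R.
  apply: step_real.
    split; first by apply: Rmult_le_pos => //; apply: Rlt_le; apply: Rinv_0_lt_compat.
    apply: Rmult_le_compat_r => //; apply: Rlt_le; apply: Rinv_0_lt_compat => //.
  apply (Rmult_le_reg_r N) => //; field_simplify; lra.
set B := A0 :\: A1.
have HB : (k0 - k1 <= INR #|B|)%R.
  have := cardsID A1 A0; rewrite -/B => E.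
  have : (#|A0 :&: A1| <= #|A1|)%nat by apply: subset_leq_card; exact: subsetIr.
  move=> H; rewrite /k0 /k1 -E INR_addn.
  have := le_INR _ _ (elimT leP H); lra.
have S0 := IH A0; have S1 := IH A1.
rewrite -/N -/k0 -/k1 in S0 S1.
have L1 : (SR A1 <= \big[Rplus/0%R]_(y : cube n) psi (hS A1 y + (y \in A1 :\: A0))%nat)%R.
  apply: RS_le => y; apply: psi_mono; exact: leq_addr.
have L0 : ((1 - g) * SR A0 + T * INR #|B| <=
    \big[Rplus/0%R]_(y : cube n) psi (hS A0 y + (y \in A0 :\: A1))%nat)%R.
  rewrite -card_sumS -RS_INR -RS_scal /SR -RS_scal -big_split /=.
  apply: RS_le => y; rewrite -/B.
  have := psi_ge0 (hS A0 y); have := Hpt (hS A0 y).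
  case: (y \in B) => H1 H2.
    rewrite addn1 [INR _]/=; lra.
  rewrite addn0 [INR _]/=; nra.
have Fin : ((k0 - k1) ^ 2 + 2 * g * k0 * (N - k0) <= (k0 - k1) * T * N)%R.
  have := Rmult_le_compat_r (N * N) _ _ (Rlt_le _ _ (Rmult_lt_0_compat _ _ HN HN)) Hfin.
  have E1 : (((k0 / N - k1 / N) ^ 2 + 2 * g * (k0 / N) * (1 - k0 / N)) * (N * N)
     = (k0 - k1) ^ 2 + 2 * g * k0 * (N - k0))%R by field; lra.
  have E2 : ((k0 / N - k1 / N) * T * (N * N) = (k0 - k1) * T * N)%R by field; lra.
  lra.
have P1 : (0 <= (1 - g) * (SR A0 * N - 2 * k0 * (N - k0)))%R by apply: Rmult_le_pos; lra.
have P2 : (0 <= T * N * (INR #|B| - (k0 - k1)))%R by apply: Rmult_le_pos; [nra | lra].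
move: L0 L1; set s0 := \big[Rplus/0%R]_(y : cube n) _; set s1 := \big[Rplus/0%R]_(y : cube n) _.
move=> L0 L1.
have Q : (0 <= (s0 + s1 - ((1 - g) * SR A0 + T * INR #|B| + SR A1)) * N)%R.
  apply: Rmult_le_pos; lra.
lra.
Qed.

Lemma main_ind n : Pn n.
Proof.
elim: n => [|n IH] A.
  have : (#|A| <= 1)%nat by have := card_cube_le A.
  have := SR_ge0 A; rewrite /= Rmult_1_r.
  case: #|A| => [|[|//]] /= H _; lra.
rewrite /SR big_cube big_bool /=.
under eq_bigr do rewrite hS_cons.
under [X in (_ <= (_ + X) * _)%R]eq_bigr do rewrite hS_cons.
rewrite card_slice INR_addn /=.
case: (leqP #|slice A true| #|slice A false|) => H.
  have := pair_step IH H; rewrite /=; lra.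
have := pair_step IH (ltnW H); rewrite /=; lra.
Qed.

Lemma foldr_big (T : eqType) (F : T -> R) (l : seq T) :
  foldr Rplus 0%R (map F l) = \big[Rplus/0%R]_(x <- l) F x.
Proof. elim: l => [|x l IH] /=; by rewrite ?big_nil ?big_cons ?IH. Qed.

Lemma integral_eq n (f : cube n -> R) :
  integral f = ((\big[Rplus/0%R]_(x : cube n) f x) * / 2 ^ n)%R.
Proof.
rewrite /integral foldr_big big_enum /= Rmult_comm -RS_scal.
apply: eq_big => // x; by rewrite Rmult_comm.
Qed.

Lemma muS_eq n (A : {set cube n}) : muS A = (INR #|A| * / 2 ^ n)%R.
Proof.
rewrite /muS integral_eq -card_sumS -RS_INR; congr (_ * _)%R.
apply: eq_bigr => x _; by case: (x \in A).
Qed.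

Theorem theorem1p1 (n : nat) (Hn : (1 <= n)%N) (A : {set cube n}) :
  (integral (fun x : cube n => rpow0 (INR (hS A x)) beta)
     >= 2 * muS A * (1 - muS A))%R.
Proof.
apply: Rle_ge; rewrite integral_eq muS_eq.
have HN : (0 < 2 ^ n)%R by apply: pow_lt; lra.
have H1 : (SR A <= \big[Rplus/0%R]_(x : cube n) rpow0 (INR (hS A x)) beta)%R.
  apply: RS_le => x; exact: psi_le_rpow.
have H2 := main_ind A.
move: H1 H2; set s := \big[Rplus/0%R]_(x : cube n) _; set N := (2 ^ n)%R; set k := INR #|A|.
move=> H1 H2.
have E : (2 * (k * / N) * (1 - k * / N) = (2 * k * (N - k)) * / N * / N)%R.
  field; rewrite /N; lra.
rewrite E; apply: Rmult_le_compat_r; first by apply: Rlt_le; apply: Rinv_0_lt_compat.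
apply (Rmult_le_reg_r N) => //; rewrite Rmult_assoc Rinv_l; last by rewrite /N; lra.
have := Rmult_le_compat_r N _ _ (Rlt_le _ _ HN) H1; lra.
Qed.
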